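(* In the standing setting, for all $A',B'\in Q'$: $B'\subseteq A'$ if and only if $g'(B')\subseteq g'(A')$. Consequently $g':Q'\to Q''$ is an order isomorphism between $(Q',\subseteq)$ and $(Q'',\subseteq)$, where $Q''=g'(Q')\subseteq Q$.
   Context: Standing setting: $(P,\preceq)$ is a finite poset with a bottom and a top element; $f:P\to P'$ is a surjective map onto $P'=f(P)$; $f^{-1}(a')=\{a\in P: f(a)=a'\}$; the relation $\preceq'$ on $P'$ is defined by $b'\preceq' a'$ iff there exist $a\in f^{-1}(a')$, $b\in f^{-1}(b')$ with $b\preceq a$. Assume the three conditions: (D) for all $a',b'\in P'$ with $b'\preceq' a'$ and every $a\in f^{-1}(a')$ there is $b\in f^{-1}(b')$ with $b\preceq a$; (U) for all $a',b'\in P'$ with $b'\preceq' a'$ and every $b\in f^{-1}(b')$ there is $a\in f^{-1}(a')$ with $b\preceq a$; (S) for all $a,b,c\in P$, if $c\preceq b\preceq a$ and $f(c)=f(a)$ then $f(b)=f(a)$. (Then $(P',\preceq')$ is a poset.) A down-set of a poset is a subset $A$ such that $a\in A$ and $b\preceq a$ imply $b\in A$. $Q$ is the set of nonempty down-sets of $(P,\preceq)$ and $Q'$ the set of nonempty down-sets of $(P',\preceq')$, each ordered by inclusion. $g:2^P\to 2^{P'}$ is $g(A)=\{f(a):a\in A\}$. For $A'\in Q'$, $g^{-1}(A')=\{A\in Q: g(A)=A'\}$ and $g'(A')=\bigcup_{A\in g^{-1}(A')}A$. *)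

(* Defs.v *)
From mathcomp Require Import all_boot.
Set Implicit Arguments. Unset Strict Implicit. Unset Printing Implicit Defensive.

Definition induced_le (P P' : finType) (le : rel P) (f : P -> P') : rel P' :=
  fun b' a' => [exists a, exists b, [&& f a == a', f b == b' & le b a]].

Definition downset (T : finType) (le : rel T) (A : {set T}) : bool :=
  [forall a, forall b, ((a \in A) && le b a) ==> (b \in A)].

Definition Qset (T : finType) (le : rel T) : {set {set T}} :=
  [set A : {set T} | (A != set0) && downset le A].

Definition g (P P' : finType) (f : P -> P') (A : {set P}) : {set P'} := f @: A.

Definition ginv (P P' : finType) (le : rel P) (f : P -> P') (A' : {set P'})
  : {set {set P}} := [set A in Qset le | g f A == A'].

Definition g' (P P' : finType) (le : rel P) (f : P -> P') (A' : {set P'})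
  : {set P} := \bigcup_(A in ginv le f A') A.

(* Main.v *)
Require Import Defs.
From mathcomp Require Import all_boot.

Lemma g'_pre (P P' : finType) (le : rel P) (f : P -> P')
  (f_surj : forall a' : P', exists a : P, f a = a') (A' : {set P'}) :
  A' \in Qset (induced_le le f) -> g' le f A' = f @^-1: A'.
Proof.
rewrite inE => /andP [nz dA].
have preQ : f @^-1: A' \in ginv le f A'.
  rewrite inE; apply/andP; split.
    rewrite inE; apply/andP; split.
      case/set0Pn: nz => a' Ha'; have [a Ha] := f_surj a'.
      by apply/set0Pn; exists a; rewrite inE Ha.
    apply/forallP => a; apply/forallP => b; apply/implyP => /andP [].
    rewrite !inE => Ha Hba.
    move/forallP: dA => /(_ (f a)) /forallP /(_ (f b)) /implyP; apply.
    rewrite Ha /=; apply/existsP; exists a; apply/existsP; exists b.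
    by rewrite !eqxx Hba.
  apply/eqP/setP => a'; apply/imsetP/idP.
    by case=> a; rewrite inE => Ha ->.
  move=> Ha'; have [a Ha] := f_surj a'; exists a; by rewrite // inE Ha.
apply/setP => x; apply/bigcupP/idP.
  case=> A; rewrite inE => /andP [_ /eqP <-] xA.
  by rewrite inE; apply/imsetP; exists x.
by move=> Hx; exists (f @^-1: A').
Qed.
Theorem lemma10 (P P' : finType) (le : rel P) (f : P -> P')
  (le_refl : reflexive le) (le_anti : antisymmetric le) (le_trans : transitive le)
  (has_bot : exists bot : P, forall a, le bot a)
  (has_top : exists top : P, forall a, le a top)
  (f_surj : forall a' : P', exists a : P, f a = a')
  (condD : forall a' b' : P', induced_le le f b' a' ->
      forall a, f a = a' -> exists b, f b = b' /\ le b a)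
  (condU : forall a' b' : P', induced_le le f b' a' ->
      forall b, f b = b' -> exists a, f a = a' /\ le b a)
  (condS : forall a b c : P, le c b -> le b a -> f c = f a -> f b = f a) :
  (* g' maps Q' into Q, so Q'' = g'(Q') is a subset of Q *)
  (forall A' : {set P'}, A' \in Qset (induced_le le f) -> g' le f A' \in Qset le) /\
  (* B' ⊆ A' iff g'(B') ⊆ g'(A') *)
  (forall A' B' : {set P'}, A' \in Qset (induced_le le f) -> B' \in Qset (induced_le le f) ->
      (B' \subset A') <-> (g' le f B' \subset g' le f A')) /\
  (* hence g' : Q' -> Q'' is injective, i.e. an order isomorphism onto its image *)
  {in Qset (induced_le le f) &, injective (g' le f)}.
Proof.
have key := @g'_pre _ _ le f f_surj.
have sub : forall A' B' : {set P'}, (B' \subset A') <-> (f @^-1: B' \subset f @^-1: A').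
  move=> A' B'; split; first by move=> H; apply: preimsetS.
  move=> H; apply/subsetP => b' Hb'; have [b Hb] := f_surj b'.
  have : b \in f @^-1: A' by apply: (subsetP H); rewrite inE Hb.
  by rewrite inE Hb.
split.
  move=> A' HA; rewrite key //.
  have := HA; rewrite inE => /andP [nz dA].
  rewrite inE; apply/andP; split.
    case/set0Pn: nz => a' Ha'; have [a Ha] := f_surj a'.
    by apply/set0Pn; exists a; rewrite inE Ha.
  apply/forallP => a; apply/forallP => b; apply/implyP => /andP [].
  rewrite !inE => Ha Hba.
  move/forallP: dA => /(_ (f a)) /forallP /(_ (f b)) /implyP; apply.
  rewrite Ha /=; apply/existsP; exists a; apply/existsP; exists b.
  by rewrite !eqxx Hba.
split.
  by move=> A' B' HA HB; rewrite !key //.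
move=> A' B' HA HB E.
apply/eqP; rewrite eqEsubset; apply/andP; split; apply/sub;
  by rewrite -!key // E.
Qed.
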